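(* Let $a,b,c,d\in\mathbb C$ and $$f=a(2x_1-x_2-x_3)(2x_2-x_3-x_1)(2x_3-x_1-x_2)+b(x_1-x_2)(x_2-x_3)(x_3-x_1)+c(x_1+x_2+x_3)^3+d(x_1^3+x_2^3+x_3^3-3x_1x_2x_3).$$ Then $f$ is completely reducible (a product of three linear forms) if and only if $a=b=c=0$ or $(27a^2+b^2)c+d^3=0$. In the first case, $$f=d(x_1+x_2+x_3)(x_1+\omega x_2+\omega^2x_3)(x_1+\omega^2x_2+\omega x_3).$$ In the second case, there exist $\alpha_1,\alpha_2,\gamma\in\mathbb C$ with $$\alpha_1^3=9a-i\sqrt3\,b,\quad \alpha_2^3=9a+i\sqrt3\,b,\quad -\alpha_1\alpha_2\gamma=3d,\quad \gamma^3=9c,$$ and for any such $\alpha_1,\alpha_2,\gamma$ we have $9f=A_xB_xC_x$, where $$A_x=\alpha_1(x_1+\omega^2x_2+\omega x_3)+\gamma(x_1+x_2+x_3)+\alpha_2(x_1+\omega x_2+\omega^2x_3),$$ $$B_x=\alpha_1(\omega^2x_1+\omega x_2+x_3)+\gamma(x_1+x_2+x_3)+\alpha_2(\omega x_1+\omega^2x_2+x_3),$$ $$C_x=\alpha_1(\omega x_1+x_2+\omega^2x_3)+\gamma(x_1+x_2+x_3)+\alpha_2(\omega^2x_1+x_2+\omega x_3).$$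
   Context: $\omega=e^{2\pi i/3}$. Every ternary cubic form over $\mathbb C$ invariant under even permutations of $x_1,x_2,x_3$ can be written in the displayed form. *)

(* Defs.v *)
From HB Require Import structures.
From mathcomp Require Import all_boot all_order all_algebra all_field.
From mathcomp Require Import mpoly.
Set Implicit Arguments. Unset Strict Implicit. Unset Printing Implicit Defensive.
Import Order.TTheory GRing.Theory Num.Theory.
Local Open Scope ring_scope.

(* The base field: an arbitrary algebraically closed numeric field C
   (e.g. the complex numbers); 'i, sqrtC, etc. come from numClosedFieldType. *)

Definition omega (C : numClosedFieldType) : C := (-1 + 'i * sqrtC 3) / 2.

Definition x1 (C : numClosedFieldType) : {mpoly C[3]} := 'X_(@Ordinal 3 0 isT).
Definition x2 (C : numClosedFieldType) : {mpoly C[3]} := 'X_(@Ordinal 3 1 isT).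
Definition x3 (C : numClosedFieldType) : {mpoly C[3]} := 'X_(@Ordinal 3 2 isT).

Definition linear_form (C : numClosedFieldType) (L : {mpoly C[3]}) : Prop :=
  exists l : 'I_3 -> C, L = \sum_(i < 3) l i *: 'X_i.

Definition completely_reducible (C : numClosedFieldType) (f : {mpoly C[3]}) : Prop :=
  exists L1 L2 L3 : {mpoly C[3]},
    [/\ linear_form L1, linear_form L2, linear_form L3 & f = L1 * L2 * L3].

Definition fcubic (C : numClosedFieldType) (a b c d : C) : {mpoly C[3]} :=
  let X1 := x1 C in let X2 := x2 C in let X3 := x3 C in
  a *: ((2 * X1 - X2 - X3) * (2 * X2 - X3 - X1) * (2 * X3 - X1 - X2))
  + b *: ((X1 - X2) * (X2 - X3) * (X3 - X1))
  + c *: ((X1 + X2 + X3) ^+ 3)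
  + d *: (X1 ^+ 3 + X2 ^+ 3 + X3 ^+ 3 - 3 * X1 * X2 * X3).

Definition Ax (C : numClosedFieldType) (al1 al2 ga : C) : {mpoly C[3]} :=
  let w := omega C in let X1 := x1 C in let X2 := x2 C in let X3 := x3 C in
  al1 *: (X1 + (w ^+ 2) *: X2 + w *: X3) + ga *: (X1 + X2 + X3)
  + al2 *: (X1 + w *: X2 + (w ^+ 2) *: X3).

Definition Bx (C : numClosedFieldType) (al1 al2 ga : C) : {mpoly C[3]} :=
  let w := omega C in let X1 := x1 C in let X2 := x2 C in let X3 := x3 C in
  al1 *: ((w ^+ 2) *: X1 + w *: X2 + X3) + ga *: (X1 + X2 + X3)
  + al2 *: (w *: X1 + (w ^+ 2) *: X2 + X3).

Definition Cx (C : numClosedFieldType) (al1 al2 ga : C) : {mpoly C[3]} :=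
  let w := omega C in let X1 := x1 C in let X2 := x2 C in let X3 := x3 C in
  al1 *: (w *: X1 + X2 + (w ^+ 2) *: X3) + ga *: (X1 + X2 + X3)
  + al2 *: ((w ^+ 2) *: X1 + X2 + w *: X3).

(* Main.v *)
Require Import Defs.
From HB Require Import structures.
From mathcomp Require Import all_boot all_order all_algebra all_field.
From mathcomp Require Import mpoly.
From mathcomp Require Import ring.
Import Order.TTheory GRing.Theory Num.Theory.
Local Open Scope ring_scope.

Section Generic.
Variable R : comRingType.

Definition Ff (a b c d X1 X2 X3 : R) :=
  a * ((2 * X1 - X2 - X3) * (2 * X2 - X3 - X1) * (2 * X3 - X1 - X2))
  + b * ((X1 - X2) * (X2 - X3) * (X3 - X1))
  + c * ((X1 + X2 + X3) ^+ 3)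
  + d * (X1 ^+ 3 + X2 ^+ 3 + X3 ^+ 3 - 3 * X1 * X2 * X3).

Lemma Ff_Y (w a b c d X1 X2 X3 : R) : w ^+ 2 + w + 1 = 0 ->
  9 * Ff a b c d X1 X2 X3 =
  9 * c * (X1 + X2 + X3) ^+ 3
  + (9 * a + (2 * w + 1) * b) * (X1 + w * X2 + w ^+ 2 * X3) ^+ 3
  + (9 * a - (2 * w + 1) * b) * (X1 + w ^+ 2 * X2 + w * X3) ^+ 3
  + 9 * d * ((X1 + X2 + X3) * (X1 + w * X2 + w ^+ 2 * X3) * (X1 + w ^+ 2 * X2 + w * X3)).
Proof.
move=> hp.
set RHS := (X in _ = X).
have -> : 9 * Ff a b c d X1 X2 X3 = RHS + (w ^+ 2 + w + 1) * (9*d*X3^+3 - 9*d*X3^+3*w - 9*d*X2*X3^+2*w^+2 - 9*d*X2^+2*X3*w^+2 + 9*d*X2^+3 - 9*d*X2^+3*w - 9*d*X1*X3^+2*w - 27*d*X1*X2*X3 + 9*d*X1*X2*X3*w - 9*d*X1*X2*X3*w^+2 - 9*d*X1*X2^+2*w - 9*d*X1^+2*X3 - 9*d*X1^+2*X2 + b*X3^+3*w^+3 + b*X3^+3*w^+4 - 2*b*X3^+3*w^+5 + 9*b*X2*X3^+2 - 9*b*X2*X3^+2*w + 9*b*X2*X3^+2*w^+3 - 6*b*X2*X3^+2*w^+4 - 9*b*X2^+2*X3 + 9*b*X2^+2*X3*w - 9*b*X2^+2*X3*w^+3 + 6*b*X2^+2*X3*w^+4 - b*X2^+3*w^+3 -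 b*X2^+3*w^+4 + 2*b*X2^+3*w^+5 - 9*b*X1*X3^+2 + 9*b*X1*X3^+2*w + 3*b*X1*X3^+2*w^+2 - 6*b*X1*X3^+2*w^+3 + 9*b*X1*X2^+2 - 9*b*X1*X2^+2*w - 3*b*X1*X2^+2*w^+2 + 6*b*X1*X2^+2*w^+3 + 9*b*X1^+2*X3 - 6*b*X1^+2*X3*w - 9*b*X1^+2*X2 + 6*b*X1^+2*X2*w + 18*a*X3^+3 - 18*a*X3^+3*w + 9*a*X3^+3*w^+3 - 9*a*X3^+3*w^+4 - 27*a*X2*X3^+2 + 27*a*X2*X3^+2*w - 27*a*X2*X3^+2*w^+3 - 27*a*X2^+2*X3 + 27*a*X2^+2*X3*w - 27*a*X2^+2*X3*w^+3 + 18*a*X2^+3 - 18*a*X2^+3*w + 9*a*X2^+3*w^+3 - 9*a*X2^+3*w^+4 - 27*a*X1*X3^+2 + 27*a*X1*X3^+2*w - 27*a*X1*X3^+2*w^+2 + 108*a*X1*X2*X3 - 108*a*X1*X2*X3*w - 27*a*X1*X2^+2 + 27*a*X1*X2^+2*w - 27*a*X1*X2^+2*w^+2 - 27*a*X1^+2*X3 - 27*a*X1^+2*X2).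
  by rewrite /RHS /Ff; ring.
by rewrite hp mul0r addr0.
Qed.

Lemma sumcube (u v z w : R) : w ^+ 2 + w + 1 = 0 ->
  (u + v + z) * (u + w ^+ 2 * v + w * z) * (u + w * v + w ^+ 2 * z)
  = u ^+ 3 + v ^+ 3 + z ^+ 3 - 3 * u * v * z.
Proof.
move=> hp.
have -> : (u + v + z) * (u + w ^+ 2 * v + w * z) * (u + w * v + w ^+ 2 * z)
  = u ^+ 3 + v ^+ 3 + z ^+ 3 - 3 * u * v * z + (w ^+ 2 + w + 1) *
   ((u + v + z) * (u * v + u * z + (w - 1) * (v ^+ 2 + z ^+ 2) + (w ^+ 2 - w + 1) * v * z)).
  by ring.
by rewrite hp mul0r addr0.
Qed.

Lemma w3 (w : R) : w ^+ 2 + w + 1 = 0 -> w ^+ 3 = 1.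
Proof.
move=> hp; have -> : w ^+ 3 = 1 + (w - 1) * (w ^+ 2 + w + 1) by ring.
by rewrite hp mulr0 addr0.
Qed.

End Generic.
Arguments Ff {R}.
Arguments Ff_Y {R}.
Arguments sumcube {R}.
Arguments w3 {R}.

Section Core.
Variable C : numClosedFieldType.

Definition lin (n0 n1 n2 y0 y1 y2 : C) := n0 * y0 + n1 * y1 + n2 * y2.
Definition gC (P Q R S y0 y1 y2 : C) :=
  P * y0 ^+ 3 + Q * y1 ^+ 3 + R * y2 ^+ 3 + S * y0 * y1 * y2.

Lemma natC_neq0 (n : nat) : (n.+1)%:R != 0 :> C.
Proof. by rewrite pnatr_eq0. Qed.

Lemma pair_zero (a0 a1 a2 b0 b1 b2 : C) : exists y0 y1 y2,
  [/\ [|| y0 != 0, y1 != 0 | y2 != 0],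
      lin a0 a1 a2 y0 y1 y2 = 0 & lin b0 b1 b2 y0 y1 y2 = 0].
Proof.
have [c0|c0] := eqVneq (a1 * b2 - a2 * b1) 0; last first.
  by exists (a1 * b2 - a2 * b1), (a2 * b0 - a0 * b2), (a0 * b1 - a1 * b0);
     split; rewrite ?c0 // /lin; ring.
have [c1|c1] := eqVneq (a2 * b0 - a0 * b2) 0; last first.
  by exists (a1 * b2 - a2 * b1), (a2 * b0 - a0 * b2), (a0 * b1 - a1 * b0);
     split; rewrite ?c1 ?orbT // /lin; ring.
have [c2|c2] := eqVneq (a0 * b1 - a1 * b0) 0; last first.
  by exists (a1 * b2 - a2 * b1), (a2 * b0 - a0 * b2), (a0 * b1 - a1 * b0);
     split; rewrite ?c2 ?orbT // /lin; ring.
have E1 : lin b0 b1 b2 a1 (-a0) 0 = - (a0 * b1 - a1 * b0) by rewrite /lin; ring.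
have E2 : lin b0 b1 b2 0 a2 (-a1) = - (a1 * b2 - a2 * b1) by rewrite /lin; ring.
have [h0|h0] := eqVneq a0 0.
  have [h1|h1] := eqVneq a1 0.
    have [h2|h2] := eqVneq a2 0.
      have La : forall y0 y1 y2, lin a0 a1 a2 y0 y1 y2 = 0.
        by move=> y0 y1 y2; rewrite /lin h0 h1 h2; ring.
      have [g0|g0] := eqVneq b0 0.
        have [g1|g1] := eqVneq b1 0.
          have [g2|g2] := eqVneq b2 0.
            exists 1, 0, 0; split; rewrite ?oner_eq0 ?La // /lin g0 g1 g2; ring.
          exists 0, b2, (-b1); split; rewrite ?g2 ?orbT ?La // /lin; ring.
        exists b1, (-b0), 0; split; rewrite ?g1 ?La // /lin; ring.
      exists b1, (-b0), 0; split; rewrite ?oppr_eq0 ?g0 ?orbT ?La // /lin; ring.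
    exists 0, a2, (-a1); split; rewrite ?h2 ?orbT ?E2 ?c0 ?oppr0 // /lin; ring.
  exists a1, (-a0), 0; split; rewrite ?h1 ?E1 ?c2 ?oppr0 // /lin; ring.
exists a1, (-a0), 0; split; rewrite ?oppr_eq0 ?h0 ?orbT ?E1 ?c2 ?oppr0 // /lin; ring.
Qed.

Section Sing.
Variables (P Q R S n10 n11 n12 n20 n21 n22 n30 n31 n32 : C).
Hypothesis H : forall y0 y1 y2, gC P Q R S y0 y1 y2 =
  lin n10 n11 n12 y0 y1 y2 * lin n20 n21 n22 y0 y1 y2 * lin n30 n31 n32 y0 y1 y2.

Lemma sing y0 y1 y2 : lin n10 n11 n12 y0 y1 y2 = 0 -> lin n20 n21 n22 y0 y1 y2 = 0 ->
  [/\ 3 * P * y0 ^+ 2 + S * y1 * y2 = 0, 3 * Q * y1 ^+ 2 + S * y0 * y2 = 0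
    & 3 * R * y2 ^+ 2 + S * y0 * y1 = 0].
Proof.
move=> h1 h2.
have key : forall v0 v1 v2, v0 * (3 * P * y0 ^+ 2 + S * y1 * y2)
   + v1 * (3 * Q * y1 ^+ 2 + S * y0 * y2) + v2 * (3 * R * y2 ^+ 2 + S * y0 * y1) = 0.
  move=> v0 v1 v2; apply: (mulfI (natC_neq0 5)); rewrite mulr0.
  pose G t := gC P Q R S (y0 + t * v0) (y1 + t * v1) (y2 + t * v2)
     - lin n10 n11 n12 (y0 + t * v0) (y1 + t * v1) (y2 + t * v2)
       * lin n20 n21 n22 (y0 + t * v0) (y1 + t * v1) (y2 + t * v2)
       * lin n30 n31 n32 (y0 + t * v0) (y1 + t * v1) (y2 + t * v2).
  have e : 6 * (v0 * (3 * P * y0 ^+ 2 + S * y1 * y2)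
   + v1 * (3 * Q * y1 ^+ 2 + S * y0 * y2) + v2 * (3 * R * y2 ^+ 2 + S * y0 * y1))
   = - 3 * G 0 + 6 * G 1 - 2 * G (-1) - G 2
     + 6 * (lin n10 n11 n12 y0 y1 y2 * lin n20 n21 n22 y0 y1 y2 * lin n30 n31 n32 v0 v1 v2
          + lin n10 n11 n12 y0 y1 y2 * lin n20 n21 n22 v0 v1 v2 * lin n30 n31 n32 y0 y1 y2
          + lin n10 n11 n12 v0 v1 v2 * lin n20 n21 n22 y0 y1 y2 * lin n30 n31 n32 y0 y1 y2).
    by rewrite /G /gC /lin; ring.
  rewrite [6%:R]/= e /G !H !subrr h1 h2; ring.
have k0 := key 1 0 0; have k1 := key 0 1 0; have k2 := key 0 0 1.
rewrite !mul1r !mul0r ?add0r ?addr0 in k0 k1 k2.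
by split.
Qed.

Lemma trip0 : n10 = 0 -> n20 = 0 -> n30 = 0 -> P + S = 0.
Proof.
move=> e1 e2 e3; apply: (mulfI (natC_neq0 1)); rewrite mulr0.
have := H 1 1 1; have := H 1 (-1) (-1).
rewrite /gC /lin e1 e2 e3 => A B.
have -> : 2%:R * (P + S) = (P * 1 ^+ 3 + Q * (-1) ^+ 3 + R * (-1) ^+ 3 + S * 1 * (-1) * (-1))
  + (P * 1 ^+ 3 + Q * 1 ^+ 3 + R * 1 ^+ 3 + S * 1 * 1 * 1) by ring.
rewrite A B; ring.
Qed.

Lemma trip1 : n11 = 0 -> n21 = 0 -> n31 = 0 -> Q + S = 0.
Proof.
move=> e1 e2 e3; apply: (mulfI (natC_neq0 1)); rewrite mulr0.
have := H 1 1 1; have := H (-1) 1 (-1).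
rewrite /gC /lin e1 e2 e3 => A B.
have -> : 2%:R * (Q + S) = (P * (-1) ^+ 3 + Q * 1 ^+ 3 + R * (-1) ^+ 3 + S * (-1) * 1 * (-1))
  + (P * 1 ^+ 3 + Q * 1 ^+ 3 + R * 1 ^+ 3 + S * 1 * 1 * 1) by ring.
rewrite A B; ring.
Qed.

Lemma trip2 : n12 = 0 -> n22 = 0 -> n32 = 0 -> R + S = 0.
Proof.
move=> e1 e2 e3; apply: (mulfI (natC_neq0 1)); rewrite mulr0.
have := H 1 1 1; have := H (-1) (-1) 1.
rewrite /gC /lin e1 e2 e3 => A B.
have -> : 2%:R * (R + S) = (P * (-1) ^+ 3 + Q * (-1) ^+ 3 + R * 1 ^+ 3 + S * (-1) * (-1) * 1)
  + (P * 1 ^+ 3 + Q * 1 ^+ 3 + R * 1 ^+ 3 + S * 1 * 1 * 1) by ring.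
rewrite A B; ring.
Qed.

End Sing.

Lemma mul3_eq0 {x y : C} : y != 0 -> 3 * x * y ^+ 2 = 0 -> x = 0.
Proof.
move=> ny /eqP; rewrite -mulrA mulf_eq0 (negPf (natC_neq0 2)) /= mulf_eq0 expf_eq0 /=.
by rewrite (negPf ny) orbF => /eqP.
Qed.

Lemma axis (P Q R S y0 y1 y2 : C) : S ^+ 3 + 27 * P * Q * R != 0 ->
  [|| y0 != 0, y1 != 0 | y2 != 0] ->
  3 * P * y0 ^+ 2 + S * y1 * y2 = 0 -> 3 * Q * y1 ^+ 2 + S * y0 * y2 = 0 ->
  3 * R * y2 ^+ 2 + S * y0 * y1 = 0 ->
  [\/ [/\ y0 != 0, y1 = 0, y2 = 0 & P = 0], [/\ y1 != 0, y0 = 0, y2 = 0 & Q = 0]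
    | [/\ y2 != 0, y0 = 0, y1 = 0 & R = 0]].
Proof.
move=> hD nz E0 E1 E2.
have S0 : forall u v : C, S * u * v = 0 -> u != 0 -> v != 0 -> S = 0.
  move=> u v /eqP; rewrite !mulf_eq0 => /orP[/orP[/eqP //|/eqP -> /eqP //]|/eqP -> _ /eqP //].
have [z0|z0] := eqVneq y0 0; have [z1|z1] := eqVneq y1 0; have [z2|z2] := eqVneq y2 0.
- by move: nz; rewrite z0 z1 z2 eqxx.
- constructor 3; split=> //; apply: (mul3_eq0 z2).
  by move: E2; rewrite z0 z1; rewrite ?mulr0 ?mul0r ?addr0.
- constructor 2; split=> //; apply: (mul3_eq0 z1).
  by move: E1; rewrite z0 z2; rewrite ?mulr0 ?mul0r ?addr0.
- exfalso; move/negP: hD; apply; apply/eqP.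
  have eS : S = 0 by apply: (S0 y1 y2) => //; move: E0; rewrite z0 expr0n /= ?mulr0 ?add0r.
  have eQ : Q = 0 by apply: (mul3_eq0 z1); move: E1; rewrite z0 eS ?mul0r ?mulr0 ?addr0.
  by rewrite eS eQ; ring.
- constructor 1; split=> //; apply: (mul3_eq0 z0).
  by move: E0; rewrite z1 z2; rewrite ?mulr0 ?mul0r ?addr0.
- exfalso; move/negP: hD; apply; apply/eqP.
  have eS : S = 0 by apply: (S0 y0 y2) => //; move: E1; rewrite z1 expr0n /= ?mulr0 ?add0r.
  have eP : P = 0 by apply: (mul3_eq0 z0); move: E0; rewrite z1 eS ?mul0r ?mulr0 ?addr0.
  by rewrite eS eP; ring.
- exfalso; move/negP: hD; apply; apply/eqP.
  have eS : S = 0 by apply: (S0 y0 y1) => //; move: E2; rewrite z2 expr0n /= ?mulr0 ?add0r.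
  have eP : P = 0 by apply: (mul3_eq0 z0); move: E0; rewrite z2 eS ?mul0r ?mulr0 ?addr0.
  by rewrite eS eP; ring.
- exfalso; move/negP: hD; apply; apply/eqP.
  have e : (S ^+ 3 + 27 * P * Q * R) * (y0 * y1 * y2) ^+ 2 =
    (3 * P * y0 ^+ 2 + S * y1 * y2 - S * y1 * y2) * (3 * Q * y1 ^+ 2 + S * y0 * y2 - S * y0 * y2)
    * (3 * R * y2 ^+ 2 + S * y0 * y1 - S * y0 * y1) + S ^+ 3 * (y0 * y1 * y2) ^+ 2 by ring.
  move: e; rewrite E0 E1 E2 => e.
  have : (S ^+ 3 + 27 * P * Q * R) * (y0 * y1 * y2) ^+ 2 = 0 by rewrite e; ring.
  move/eqP; rewrite mulf_eq0 expf_eq0 /= !mulf_eq0 (negPf z0) (negPf z1) (negPf z2) /= ?orbF.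
  by move/eqP.
Qed.


Arguments sing {P Q R S n10 n11 n12 n20 n21 n22 n30 n31 n32} H {y0 y1 y2}.
Arguments trip0 {P Q R S n10 n11 n12 n20 n21 n22 n30 n31 n32} H.
Arguments trip1 {P Q R S n10 n11 n12 n20 n21 n22 n30 n31 n32} H.
Arguments trip2 {P Q R S n10 n11 n12 n20 n21 n22 n30 n31 n32} H.

Arguments axis {P Q R S y0 y1 y2}.

Lemma lin_ax0 (a0 a1 a2 y : C) : y != 0 -> lin a0 a1 a2 y 0 0 = 0 -> a0 = 0.
Proof. by move=> ny /eqP; rewrite /lin !mulr0 !addr0 mulf_eq0 (negPf ny) orbF => /eqP. Qed.
Lemma lin_ax1 (a0 a1 a2 y : C) : y != 0 -> lin a0 a1 a2 0 y 0 = 0 -> a1 = 0.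
Proof. by move=> ny /eqP; rewrite /lin !mulr0 add0r addr0 mulf_eq0 (negPf ny) orbF => /eqP. Qed.
Lemma lin_ax2 (a0 a1 a2 y : C) : y != 0 -> lin a0 a1 a2 0 0 y = 0 -> a2 = 0.
Proof. by move=> ny /eqP; rewrite /lin !mulr0 !add0r mulf_eq0 (negPf ny) orbF => /eqP. Qed.

Lemma pt (P Q R S a0 a1 a2 b0 b1 b2 e0 e1 e2 : C) : S ^+ 3 + 27 * P * Q * R != 0 ->
  (forall y0 y1 y2, gC P Q R S y0 y1 y2 =
     lin a0 a1 a2 y0 y1 y2 * lin b0 b1 b2 y0 y1 y2 * lin e0 e1 e2 y0 y1 y2) ->
  [\/ [/\ P = 0, a0 = 0 & b0 = 0], [/\ Q = 0, a1 = 0 & b1 = 0]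
    | [/\ R = 0, a2 = 0 & b2 = 0]].
Proof.
move=> hD H.
have [y0 [y1 [y2 [nz ha hb]]]] := pair_zero a0 a1 a2 b0 b1 b2.
have [E0 E1 E2] := sing H ha hb.
case: (axis hD nz E0 E1 E2) => [[z0 q1 q2 ->]|[z1 q0 q2 ->]|[z2 q0 q1 ->]];
  move: ha hb; rewrite ?q0 ?q1 ?q2 => ha hb.
- by constructor 1; split=> //; [exact: lin_ax0 ha|exact: lin_ax0 hb].
- by constructor 2; split=> //; [exact: lin_ax1 ha|exact: lin_ax1 hb].
- by constructor 3; split=> //; [exact: lin_ax2 ha|exact: lin_ax2 hb].
Qed.

Arguments pt {P Q R S a0 a1 a2 b0 b1 b2 e0 e1 e2}.

Lemma core (P Q R S n10 n11 n12 n20 n21 n22 n30 n31 n32 : C) :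
  (forall y0 y1 y2, gC P Q R S y0 y1 y2 =
     lin n10 n11 n12 y0 y1 y2 * lin n20 n21 n22 y0 y1 y2 * lin n30 n31 n32 y0 y1 y2) ->
  S ^+ 3 + 27 * P * Q * R = 0 \/ [/\ P = 0, Q = 0 & R = 0].
Proof.
move=> H.
have [hD|hD] := eqVneq (S ^+ 3 + 27 * P * Q * R) 0; [by left|right].
have H13 : forall y0 y1 y2, gC P Q R S y0 y1 y2 =
     lin n10 n11 n12 y0 y1 y2 * lin n30 n31 n32 y0 y1 y2 * lin n20 n21 n22 y0 y1 y2.
  by move=> y0 y1 y2; rewrite H; ring.
have H23 : forall y0 y1 y2, gC P Q R S y0 y1 y2 =
     lin n20 n21 n22 y0 y1 y2 * lin n30 n31 n32 y0 y1 y2 * lin n10 n11 n12 y0 y1 y2.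
  by move=> y0 y1 y2; rewrite H; ring.
have F0 : n10 = 0 -> n20 = 0 -> n30 = 0 -> P = 0 -> False.
  move=> e1 e2 e3 eP; have := trip0 H e1 e2 e3; rewrite eP add0r => eS.
  by move/eqP: hD; apply; rewrite eS eP; ring.
have F1 : n11 = 0 -> n21 = 0 -> n31 = 0 -> Q = 0 -> False.
  move=> e1 e2 e3 eP; have := trip1 H e1 e2 e3; rewrite eP add0r => eS.
  by move/eqP: hD; apply; rewrite eS eP; ring.
have F2 : n12 = 0 -> n22 = 0 -> n32 = 0 -> R = 0 -> False.
  move=> e1 e2 e3 eP; have := trip2 H e1 e2 e3; rewrite eP add0r => eS.
  by move/eqP: hD; apply; rewrite eS eP; ring.
case: (pt hD H) => [[? ? ?]|[? ? ?]|[? ? ?]];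
case: (pt hD H13) => [[? ? ?]|[? ? ?]|[? ? ?]];
case: (pt hD H23) => [[? ? ?]|[? ? ?]|[? ? ?]];
  first [ by split | exfalso; first [ by apply: F0 | by apply: F1 | by apply: F2 ] ].
Qed.

End Core.
Arguments lin {C}.
Arguments gC {C}.
Arguments core {C P Q R S n10 n11 n12 n20 n21 n22 n30 n31 n32}.

Section Gen2.
Variable R : comRingType.

Definition AxF (w al1 al2 ga X1 X2 X3 : R) :=
  al1 * (X1 + w ^+ 2 * X2 + w * X3) + ga * (X1 + X2 + X3) + al2 * (X1 + w * X2 + w ^+ 2 * X3).
Definition BxF (w al1 al2 ga X1 X2 X3 : R) :=
  al1 * (w ^+ 2 * X1 + w * X2 + X3) + ga * (X1 + X2 + X3) + al2 * (w * X1 + w ^+ 2 * X2 + X3).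
Definition CxF (w al1 al2 ga X1 X2 X3 : R) :=
  al1 * (w * X1 + X2 + w ^+ 2 * X3) + ga * (X1 + X2 + X3) + al2 * (w ^+ 2 * X1 + X2 + w * X3).

Lemma fact9 (w a b c d al1 al2 ga X1 X2 X3 : R) : w ^+ 2 + w + 1 = 0 ->
  al1 ^+ 3 = 9 * a - (2 * w + 1) * b -> al2 ^+ 3 = 9 * a + (2 * w + 1) * b ->
  - (al1 * al2 * ga) = 3 * d -> ga ^+ 3 = 9 * c ->
  9 * Ff a b c d X1 X2 X3 = AxF w al1 al2 ga X1 X2 X3 * BxF w al1 al2 ga X1 X2 X3
                            * CxF w al1 al2 ga X1 X2 X3.
Proof.
move=> hp h1 h2 hd hg.
have h3 := @w3 _ _ hp.
set Y0 := X1 + X2 + X3; set Y1 := X1 + w * X2 + w ^+ 2 * X3;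
set Y2 := X1 + w ^+ 2 * X2 + w * X3.
have eA : AxF w al1 al2 ga X1 X2 X3 = ga * Y0 + al1 * Y2 + al2 * Y1 by rewrite /AxF /Y0 /Y1 /Y2; ring.
have eB : BxF w al1 al2 ga X1 X2 X3 = ga * Y0 + w ^+ 2 * (al1 * Y2) + w * (al2 * Y1)
   + (1 - w ^+ 3) * (al1 * w * X2 + al1 * X3 + al2 * X3) by rewrite /BxF /Y0 /Y1 /Y2; ring.
have eC : CxF w al1 al2 ga X1 X2 X3 = ga * Y0 + w * (al1 * Y2) + w ^+ 2 * (al2 * Y1)
   + (1 - w ^+ 3) * (al1 * X2 + al2 * X2 + al2 * w * X3) by rewrite /CxF /Y0 /Y1 /Y2; ring.
rewrite eA eB eC h3 subrr !mul0r !addr0 sumcube // (@Ff_Y _ _ _ _ _ _ _ _ _ hp) -/Y0 -/Y1 -/Y2.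
rewrite !exprMn hg h1 h2.
have -> : 3 * (ga * Y0) * (al1 * Y2) * (al2 * Y1) = - 3 * (- (al1 * al2 * ga)) * (Y0 * Y1 * Y2)
  by ring.
rewrite hd; ring.
Qed.

Lemma I1gen (w d X1 X2 X3 : R) : w ^+ 2 + w + 1 = 0 ->
  Ff 0 0 0 d X1 X2 X3 = d * ((X1 + X2 + X3) * (X1 + w * X2 + w ^+ 2 * X3) * (X1 + w ^+ 2 * X2 + w * X3)).
Proof.
move=> hp.
rewrite (_ : (X1 + X2 + X3) * (X1 + w * X2 + w ^+ 2 * X3) * (X1 + w ^+ 2 * X2 + w * X3)
  = (X1 + X2 + X3) * (X1 + w ^+ 2 * X2 + w * X3) * (X1 + w * X2 + w ^+ 2 * X3)); last by ring.
rewrite sumcube // /Ff; ring.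
Qed.

Lemma rmorph_Ff (S : comRingType) (f : {rmorphism R -> S}) a b c d X1 X2 X3 :
  f (Ff a b c d X1 X2 X3) = Ff (f a) (f b) (f c) (f d) (f X1) (f X2) (f X3).
Proof. rewrite /Ff !(rmorphD, rmorphB, rmorphN, rmorphM, rmorphXn, rmorph_nat) ?rmorph1; ring. Qed.

End Gen2.
Arguments AxF {R}.
Arguments BxF {R}.
Arguments CxF {R}.
Arguments fact9 {R}.
Arguments I1gen {R}.

Section Main.
Variable C : numClosedFieldType.
Local Notation w := (omega C).
Local Notation s := ('i * sqrtC 3 : C).

Lemma s2 : s ^+ 2 = -3.
Proof. by rewrite exprMn sqrCi sqrtCK mulN1r. Qed.

Lemma s_w : s = 2 * w + 1.
Proof. by rewrite /omega; field. Qed.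

Lemma pw : w ^+ 2 + w + 1 = 0.
Proof.
have e : 4 * (w ^+ 2 + w + 1) = (2 * w + 1) ^+ 2 + 3 by ring.
apply: (mulfI (natC_neq0 C 3)); rewrite mulr0 [4%:R]/= e -s_w s2; ring.
Qed.

Lemma fcubicE a b c d : fcubic a b c d = Ff a%:MP b%:MP c%:MP d%:MP (x1 C) (x2 C) (x3 C).
Proof. by rewrite /fcubic /Ff /= -!mul_mpolyC. Qed.


Definition i0 : 'I_3 := @Ordinal 3 0 isT.
Definition i1 : 'I_3 := @Ordinal 3 1 isT.
Definition i2 : 'I_3 := @Ordinal 3 2 isT.

Lemma sum3 (T : nmodType) (F : 'I_3 -> T) : \sum_(i < 3) F i = F i0 + F i1 + F i2.
Proof.
rewrite !big_ord_recr big_ord0 /= add0r.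
by congr (F _ + F _ + F _); apply: val_inj.
Qed.

Lemma lin3 (l0 l1 l2 : C) : linear_form (l0 *: x1 C + l1 *: x2 C + l2 *: x3 C).
Proof.
exists (fun i : 'I_3 => match val i with 0 => l0 | 1 => l1 | _ => l2 end).
by rewrite sum3.
Qed.

Lemma linZ (k : C) L : linear_form L -> linear_form (k *: L).
Proof.
case=> l ->; exists (fun i => k * l i).
by rewrite scaler_sumr; apply: eq_bigr => i _; rewrite scalerA.
Qed.

Lemma meval_lin (v : 'I_3 -> C) (l : 'I_3 -> C) :
  meval v (\sum_(i < 3) l i *: 'X_i) = l i0 * v i0 + l i1 * v i1 + l i2 * v i2.
Proof. by rewrite sum3 !mevalD !mevalZ !mevalXU. Qed.


Lemma meval_Ff (v : 'I_3 -> C) (a b c d X1 X2 X3 : {mpoly C[3]}) :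
  meval v (Ff a b c d X1 X2 X3) = Ff (meval v a) (meval v b) (meval v c) (meval v d)
    (meval v X1) (meval v X2) (meval v X3).
Proof. exact: (@rmorph_Ff _ _ (meval v)). Qed.

Lemma mulK_eq0 (k : nat) (x : C) : (k.+1)%:R * x = 0 -> x = 0.
Proof. by move/eqP; rewrite mulf_eq0 (negPf (natC_neq0 C k)) => /eqP. Qed.

Lemma forward (a b c d : C) : completely_reducible (fcubic a b c d) ->
  (a = 0 /\ b = 0 /\ c = 0) \/ (27 * a ^+ 2 + b ^+ 2) * c + d ^+ 3 = 0.
Proof.
case=> L1 [L2 [L3 [[l1 ->] [l2 ->] [l3 ->] hf]]].
have hs : (2 * w + 1) ^+ 2 + 3 = 0.
  have e : (2 * w + 1) ^+ 2 + 3 = 4 * (w ^+ 2 + w + 1) by ring.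
  by rewrite e pw mulr0.
pose ps (y0 y1 y2 : C) (i : 'I_3) : C := match val i with
  | 0 => y0 + y1 + y2 | 1 => y0 + w ^+ 2 * y1 + w * y2 | _ => y0 + w * y1 + w ^+ 2 * y2 end.
have P0 : forall y0 y1 y2, ps y0 y1 y2 i0 = y0 + y1 + y2 by [].
have P1 : forall y0 y1 y2, ps y0 y1 y2 i1 = y0 + w ^+ 2 * y1 + w * y2 by [].
have P2 : forall y0 y1 y2, ps y0 y1 y2 i2 = y0 + w * y1 + w ^+ 2 * y2 by [].
have H : forall y0 y1 y2,
  gC (27 * c) (3 * (9 * a + (2 * w + 1) * b)) (3 * (9 * a - (2 * w + 1) * b)) (27 * d) y0 y1 y2 =
  lin (l1 i0 + l1 i1 + l1 i2) (l1 i0 + w ^+ 2 * l1 i1 + w * l1 i2)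
      (l1 i0 + w * l1 i1 + w ^+ 2 * l1 i2) y0 y1 y2
  * lin (l2 i0 + l2 i1 + l2 i2) (l2 i0 + w ^+ 2 * l2 i1 + w * l2 i2)
      (l2 i0 + w * l2 i1 + w ^+ 2 * l2 i2) y0 y1 y2
  * lin (l3 i0 + l3 i1 + l3 i2) (l3 i0 + w ^+ 2 * l3 i1 + w * l3 i2)
      (l3 i0 + w * l3 i1 + w ^+ 2 * l3 i2) y0 y1 y2.
  move=> y0 y1 y2.
  have e := congr1 (meval (ps y0 y1 y2)) hf.
  rewrite fcubicE meval_Ff !mevalC !mevalM !meval_lin in e.
  rewrite /x1 /x2 /x3 !mevalXU -/i0 -/i1 -/i2 !P0 !P1 !P2 in e.
  have e9 := Ff_Y w a b c d (y0 + y1 + y2) (y0 + w ^+ 2 * y1 + w * y2)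
                  (y0 + w * y1 + w ^+ 2 * y2) pw.
  rewrite e in e9.
  have Y0p : y0 + y1 + y2 + (y0 + w ^+ 2 * y1 + w * y2) + (y0 + w * y1 + w ^+ 2 * y2) = 3 * y0.
    rewrite (_ : _ + _ + _ = 3 * y0 + (w ^+ 2 + w + 1) * (y1 + y2)); last by ring.
    by rewrite pw mul0r addr0.
  have Y1p : y0 + y1 + y2 + w * (y0 + w ^+ 2 * y1 + w * y2) + w ^+ 2 * (y0 + w * y1 + w ^+ 2 * y2)
      = 3 * y1.
    rewrite (_ : _ + _ + _ = 3 * y1 + (w ^+ 2 + w + 1) *
       (y0 + 2 * (w - 1) * y1 + (w ^+ 2 - w + 1) * y2)); last by ring.
    by rewrite pw mul0r addr0.
  have Y2p : y0 + y1 + y2 + w ^+ 2 * (y0 + w ^+ 2 * y1 + w * y2) + w * (y0 + w * y1 + w ^+ 2 * y2)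
      = 3 * y2.
    rewrite (_ : _ + _ + _ = 3 * y2 + (w ^+ 2 + w + 1) *
       (y0 + (w ^+ 2 - w + 1) * y1 + 2 * (w - 1) * y2)); last by ring.
    by rewrite pw mul0r addr0.
  rewrite Y0p Y1p Y2p in e9.
  move: e9; set M := (X in 9 * X = _) => e9.
  apply: (mulfI (natC_neq0 C 8)).
  transitivity (9 * M); first by rewrite e9 /gC; ring.
  by rewrite /M /lin; ring.
case: (core H) => [hD|[hP hQ hR]].
  right; apply: (@mulK_eq0 (27 ^ 3).-1); rewrite prednK // natrX.
  rewrite (_ : 27 ^+ 3 * ((27 * a ^+ 2 + b ^+ 2) * c + d ^+ 3) =
    (27 * d) ^+ 3 + 27 * (27 * c) * (3 * (9 * a + (2 * w + 1) * b)) * (3 * (9 * a - (2 * w + 1) * b))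
    + 27 ^+ 2 * 9 * c * b ^+ 2 * ((2 * w + 1) ^+ 2 + 3)); last by ring.
  by rewrite hD hs mulr0 addr0.
left.
have ec : c = 0 by apply: (@mulK_eq0 26).
have e1 : 9 * a + (2 * w + 1) * b = 0 by apply: (@mulK_eq0 2).
have e2 : 9 * a - (2 * w + 1) * b = 0 by apply: (@mulK_eq0 2).
have ea : a = 0.
  apply: (@mulK_eq0 17).
  rewrite (_ : 18 * a = (9 * a + (2 * w + 1) * b) + (9 * a - (2 * w + 1) * b)); last by ring.
  by rewrite e1 e2 addr0.
split=> //; split=> //.
move: e1; rewrite ea mulr0 add0r => /eqP; rewrite mulf_eq0 => /orP[/eqP hw|/eqP //].
by move: hs; rewrite hw expr0n /= add0r => /eqP; rewrite (negPf (natC_neq0 C 2)).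
Qed.


Lemma exist_al (a b c d : C) : (27 * a ^+ 2 + b ^+ 2) * c + d ^+ 3 = 0 ->
  exists al1 al2 ga : C,
    [/\ al1 ^+ 3 = 9 * a - s * b, al2 ^+ 3 = 9 * a + s * b,
        - (al1 * al2 * ga) = 3 * d & ga ^+ 3 = 9 * c].
Proof.
move=> hT.
have cr : forall z : C, (3.-root z) ^+ 3 = z by move=> z; exact: rootCK.
have hz : (9 * a - s * b) * (9 * a + s * b) = 3 * (27 * a ^+ 2 + b ^+ 2).
  rewrite (_ : (9 * a - s * b) * (9 * a + s * b) = 81 * a ^+ 2 - s ^+ 2 * b ^+ 2); last by ring.
  rewrite s2; ring.
set z1 := 9 * a - s * b in hz *; set z2 := 9 * a + s * b in hz *.
have [h0|h0] := eqVneq (3.-root z1 * 3.-root (9 * c)) 0.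
  have hd : d = 0.
    have h27 : (27 * a ^+ 2 + b ^+ 2) * c = 0.
      move/eqP: h0; rewrite mulf_eq0 => /orP[/eqP e|/eqP e].
        have : z1 = 0 by rewrite -(cr z1) e expr0n.
        move=> ez; move: hz; rewrite ez mul0r => /esym/eqP.
        by rewrite mulf_eq0 (negPf (natC_neq0 C 2)) => /eqP ->; rewrite mul0r.
      have : 9 * c = 0 by rewrite -(cr (9 * c)) e expr0n.
      by move/(@mulK_eq0 8) ->; rewrite mulr0.
    move: hT; rewrite h27 add0r => /eqP; rewrite expf_eq0 /= => /eqP //.
  exists (3.-root z1), (3.-root z2), (3.-root (9 * c)); split; rewrite ?cr //.
  by rewrite hd mulr0 mulrAC h0 mul0r oppr0.
exists (3.-root z1), (- 3 * d / (3.-root z1 * 3.-root (9 * c))), (3.-root (9 * c)).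
split; rewrite ?cr //.
- have nz : z1 * (9 * c) != 0 by rewrite -(cr z1) -(cr (9 * c)) -exprMn expf_neq0.
  rewrite expr_div_n [(3.-root z1 * _) ^+ 3]exprMn !cr.
  rewrite (_ : (- 3 * d) ^+ 3 = z2 * (z1 * (9 * c))) ?mulfK //.
  rewrite mulrA [z2 * z1]mulrC hz.
  rewrite (_ : (- 3 * d) ^+ 3 = - 27 * ((27 * a ^+ 2 + b ^+ 2) * c + d ^+ 3)
      + 3 * (27 * a ^+ 2 + b ^+ 2) * (9 * c)); last by ring.
  by rewrite hT mulr0 add0r.
- rewrite mulrAC mulrC divfK //; ring.
Qed.

Lemma AxE (al1 al2 ga : C) : Ax al1 al2 ga =
  AxF w%:MP al1%:MP al2%:MP ga%:MP (x1 C) (x2 C) (x3 C).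
Proof. rewrite /Ax /AxF /= -!mul_mpolyC; ring. Qed.
Lemma BxE (al1 al2 ga : C) : Bx al1 al2 ga =
  BxF w%:MP al1%:MP al2%:MP ga%:MP (x1 C) (x2 C) (x3 C).
Proof. rewrite /Bx /BxF /= -!mul_mpolyC; ring. Qed.
Lemma CxE (al1 al2 ga : C) : Cx al1 al2 ga =
  CxF w%:MP al1%:MP al2%:MP ga%:MP (x1 C) (x2 C) (x3 C).
Proof. rewrite /Cx /CxF /= -!mul_mpolyC; ring. Qed.

Lemma AxL (al1 al2 ga : C) : Ax al1 al2 ga = (al1 + ga + al2) *: x1 C
  + (al1 * w ^+ 2 + ga + al2 * w) *: x2 C + (al1 * w + ga + al2 * w ^+ 2) *: x3 C.
Proof. rewrite /Ax /= -!mul_mpolyC; ring. Qed.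
Lemma BxL (al1 al2 ga : C) : Bx al1 al2 ga = (al1 * w ^+ 2 + ga + al2 * w) *: x1 C
  + (al1 * w + ga + al2 * w ^+ 2) *: x2 C + (al1 + ga + al2) *: x3 C.
Proof. rewrite /Bx /= -!mul_mpolyC; ring. Qed.
Lemma CxL (al1 al2 ga : C) : Cx al1 al2 ga = (al1 * w + ga + al2 * w ^+ 2) *: x1 C
  + (al1 + ga + al2) *: x2 C + (al1 * w ^+ 2 + ga + al2 * w) *: x3 C.
Proof. rewrite /Cx /= -!mul_mpolyC; ring. Qed.


Lemma fact_mpoly (a b c d al1 al2 ga : C) :
  al1 ^+ 3 = 9 * a - s * b -> al2 ^+ 3 = 9 * a + s * b ->
  - (al1 * al2 * ga) = 3 * d -> ga ^+ 3 = 9 * c ->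
  9 *: fcubic a b c d = Ax al1 al2 ga * Bx al1 al2 ga * Cx al1 al2 ga.
Proof.
rewrite s_w => h1 h2 hd hg.
rewrite AxE BxE CxE -mul_mpolyC fcubicE.
have -> : (9 : C)%:MP_[3] = 9 by ring.
apply: fact9.
- transitivity ((w ^+ 2 + w + 1)%:MP_[3]); first by ring.
  by rewrite pw; ring.
- transitivity ((al1 ^+ 3)%:MP_[3]); first by ring.
  by rewrite h1; ring.
- transitivity ((al2 ^+ 3)%:MP_[3]); first by ring.
  by rewrite h2; ring.
- transitivity ((- (al1 * al2 * ga))%:MP_[3]); first by ring.
  by rewrite hd; ring.
- transitivity ((ga ^+ 3)%:MP_[3]); first by ring.
  by rewrite hg; ring.
Qed.

Lemma I1_mpoly (d : C) : fcubic 0 0 0 d =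
  d *: ((x1 C + x2 C + x3 C) * (x1 C + w *: x2 C + (w ^+ 2) *: x3 C)
        * (x1 C + (w ^+ 2) *: x2 C + w *: x3 C)).
Proof.
rewrite fcubicE mpolyC0 (I1gen (w%:MP)).
  by rewrite -!mul_mpolyC; ring.
transitivity ((w ^+ 2 + w + 1)%:MP_[3]); first by ring.
by rewrite pw; ring.
Qed.

End Main.

Theorem theorem11p1 (C : numClosedFieldType) (a b c d : C) :
  (completely_reducible (fcubic a b c d) <->
     ((a = 0 /\ b = 0 /\ c = 0) \/ (27 * a ^+ 2 + b ^+ 2) * c + d ^+ 3 = 0))
  /\ ((a = 0 /\ b = 0 /\ c = 0) ->
        fcubic a b c d =
        d *: ((x1 C + x2 C + x3 C)
              * (x1 C + omega C *: x2 C + (omega C ^+ 2) *: x3 C)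
              * (x1 C + (omega C ^+ 2) *: x2 C + omega C *: x3 C)))
  /\ ((27 * a ^+ 2 + b ^+ 2) * c + d ^+ 3 = 0 ->
        (exists al1 al2 ga : C,
            [/\ al1 ^+ 3 = 9 * a - 'i * sqrtC 3 * b,
                al2 ^+ 3 = 9 * a + 'i * sqrtC 3 * b,
                - (al1 * al2 * ga) = 3 * d
              & ga ^+ 3 = 9 * c])
        /\ (forall al1 al2 ga : C,
              al1 ^+ 3 = 9 * a - 'i * sqrtC 3 * b ->
              al2 ^+ 3 = 9 * a + 'i * sqrtC 3 * b ->
              - (al1 * al2 * ga) = 3 * d ->
              ga ^+ 3 = 9 * c ->
              9 *: fcubic a b c d = Ax al1 al2 ga * Bx al1 al2 ga * Cx al1 al2 ga)).
Proof.
have HI1 : (a = 0 /\ b = 0 /\ c = 0) ->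
    fcubic a b c d = d *: ((x1 C + x2 C + x3 C)
              * (x1 C + omega C *: x2 C + (omega C ^+ 2) *: x3 C)
              * (x1 C + (omega C ^+ 2) *: x2 C + omega C *: x3 C)).
  by case=> [-> [-> ->]]; exact: I1_mpoly.
split; last split=> //.
  split; first exact: forward.
  case=> [habc|hT].
    exists (d *: (x1 C + x2 C + x3 C)), (x1 C + omega C *: x2 C + (omega C ^+ 2) *: x3 C),
      (x1 C + (omega C ^+ 2) *: x2 C + omega C *: x3 C); split.
    - by rewrite !scalerDr; apply: lin3.
    - by rewrite -{1}[x1 C]scale1r; apply: lin3.
    - by rewrite -{1}[x1 C]scale1r; apply: lin3.
    - by rewrite HI1 // -!scalerAl.
  have [al1 [al2 [ga [h1 h2 hd hg]]]] := @exist_al C _ _ _ _ hT.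
  have hf := @fact_mpoly C _ _ _ _ _ _ _ h1 h2 hd hg.
  exists (9^-1 *: Ax al1 al2 ga), (Bx al1 al2 ga), (Cx al1 al2 ga); split.
  - by apply: linZ; rewrite AxL; apply: lin3.
  - by rewrite BxL; apply: lin3.
  - by rewrite CxL; apply: lin3.
  - by rewrite -!scalerAl -hf scalerA mulVf ?scale1r // (natC_neq0 C 8).
move=> hT; split; first exact: exist_al.
by move=> al1 al2 ga; exact: fact_mpoly.
Qed.
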